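(* Let $s>2$ be an integer, let $k$ be a positive even integer, and let $a_1,\dots,a_k$ be positive integers with $a_{2i-1}+a_{2i}=s$ for $i=1,\dots,k/2$. If \[ k \ \ge\ 2^{\frac{s}{2}+1}\cdot\left\lceil \left(\frac{s+3}{s-2}\right)^{\frac{s}{2}-1}\left(\frac{5s+6}{5s-6}\right)+1\right\rceil, \] then \[ \Big[0,\tfrac{k}{2}\Big]=\Big\{\sum_{i=1}^{k/2} x_{2i-1}^{a_{2i-1}}x_{2i}^{a_{2i}} \;:\; x_1,\dots,x_k\in C\Big\}. \]
   Context: $C\subseteq[0,1]$ denotes the classical middle-thirds (ternary) Cantor set. *)

(* Defs.v *)
From Stdlib Require Import Reals Lra Lia Arith.
Open Scope R_scope.

(* Level-n approximation of the middle-thirds Cantor set: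
   C_0 = [0,1],  C_{n+1} = (1/3) C_n  U  (2/3 + (1/3) C_n). *)
Fixpoint cantor_level (n : nat) (x : R) : Prop :=
  match n with
  | O => 0 <= x <= 1
  | S m => cantor_level m (3 * x) \/ cantor_level m (3 * x - 2)
  end.

Definition cantor_set (x : R) : Prop := forall n : nat, cantor_level n x.

Definition Rceil (x : R) : Z := (- (up (- x) - 1))%Z.

(* Main.v *)
Require Import Defs.
From Stdlib Require Import Reals Lra Lia Arith Classical ClassicalEpsilon.
Open Scope R_scope.

Lemma cantor_level_01 : forall n x, cantor_level n x -> 0 <= x <= 1.
Proof.
  induction n as [|n IH]; intros x H; simpl in H.
  - exact H.
  - destruct H as [H|H]; apply IH in H; lra.
Qed.

Lemma cantor_set_01 : forall x, cantor_set x -> 0 <= x <= 1.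
Proof. intros x H. apply (cantor_level_01 0), H. Qed.

Lemma cantor_div3 : forall v, cantor_set v -> cantor_set (v / 3).
Proof.
  intros v H n. destruct n as [|n]; simpl.
  - pose proof (cantor_set_01 v H). lra.
  - left. replace (3 * (v / 3)) with v by field. apply H.
Qed.

Lemma cantor_add2 : forall v, cantor_set v -> cantor_set ((v + 2) / 3).
Proof.
  intros v H n. destruct n as [|n]; simpl.
  - pose proof (cantor_set_01 v H). lra.
  - right. replace (3 * ((v + 2) / 3) - 2) with v by field. apply H.
Qed.

Lemma cantor_0 : cantor_set 0.
Proof. intros n; induction n; simpl; [lra| left; replace (3*0) with 0 by ring; exact IHn]. Qed.

Lemma cantor_1 : cantor_set 1.
Proof. intros n; induction n; simpl; [lra| right; replace (3*1-2) with 1 by ring; exact IHn]. Qed.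

Lemma cantor_top : forall J v, cantor_set v -> cantor_set (1 - (/3)^J + (/3)^J * v).
Proof.
  induction J as [|J IH]; intros v H.
  - simpl. replace (1 - 1 + 1 * v) with v by ring. exact H.
  - replace (1 - (/3)^(S J) + (/3)^(S J) * v) with ((1 - (/3)^J + (/3)^J * v + 2)/3)
      by (simpl; field).
    apply cantor_add2, IH, H.
Qed.

Fixpoint lep (L : nat) (z : R) : Prop :=
  match L with
  | O => z = 0
  | S L' => exists z', lep L' z' /\ (z = z' / 3 \/ z = (z' + 2) / 3)
  end.

Lemma lep_bounds : forall L z, lep L z -> 0 <= z /\ z + (/3)^L <= 1.
Proof.
  induction L as [|L IH]; intros z H; simpl in *.
  - subst; lra.
  - destruct H as [z' [H1 [H2|H2]]]; apply IH in H1; subst;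
    pose proof (pow_lt_1_compat (/3) L) ; split; lra.
Qed.

Lemma lep_level : forall L z t, lep L z -> z <= t <= z + (/3)^L -> cantor_level L t.
Proof.
  induction L as [|L IH]; intros z t H Ht; simpl in *.
  - subst. pose proof (lep_bounds 0 0 eq_refl). lra.
  - destruct H as [z' [H1 [H2|H2]]]; subst.
    + left. apply (IH z'); auto. lra.
    + right. apply (IH z'); auto. lra.
Qed.

Lemma lep_refine : forall L z, lep L z -> lep (S L) z /\ lep (S L) (z + 2 * (/3)^(S L)).
Proof.
  induction L as [|L IH]; intros z H.
  - simpl in H. subst. split; exists 0; simpl; split; auto; [left|right]; field.
  - destruct H as [z' [H1 H2]]. destruct (IH z' H1) as [Ha Hb]. split.
    + exists z'. split; auto.
    + exists (z' + 2 * (/3)^(S L)). split; auto.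
      destruct H2 as [H2|H2]; subst; [left|right]; simpl; field.
Qed.


Lemma third_ge0 : 0 <= /3. Proof. apply Rlt_le, Rinv_0_lt_compat; lra. Qed.
Lemma third_lt1 : Rabs (/3) < 1. Proof. rewrite Rabs_pos_eq by apply third_ge0. apply (Rmult_lt_reg_l 3); [lra|]. rewrite Rinv_r; lra. Qed.

Definition V := nat -> R.
Definition add_ind (u : V) (h : R) (j : nat) : V :=
  fun i => if Nat.ltb i j then u i + h else u i.

Lemma add_ind_lt : forall u h j i, (i < j)%nat -> add_ind u h j i = u i + h.
Proof. intros. unfold add_ind. destruct (Nat.ltb_spec i j); [reflexivity|lia]. Qed.
Lemma add_ind_ge : forall u h j i, (j <= i)%nat -> add_ind u h j i = u i.
Proof. intros. unfold add_ind. destruct (Nat.ltb_spec i j); [lia|reflexivity]. Qed.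

Lemma chain_pick : forall n (a b : nat -> R) y, a 0%nat <= y -> y <= b n ->
  (forall j, (j < n)%nat -> a (S j) <= b j) -> exists j, (j <= n)%nat /\ a j <= y <= b j.
Proof.
  induction n as [|n IH]; intros a b y Ha Hb Hc.
  - exists 0%nat. split; [lia|lra].
  - destruct (Rle_dec y (b 0%nat)) as [H|H].
    + exists 0%nat. split; [lia|lra].
    + destruct (IH (fun j => a (S j)) (fun j => b (S j)) y) as [j [Hj1 Hj2]].
      * specialize (Hc 0%nat ltac:(lia)). lra.
      * exact Hb.
      * intros j Hj. apply Hc. lia.
      * exists (S j). split; [lia|exact Hj2].
Qed.

Definition in01 (n : nat) (u : V) := forall i, (i < n)%nat -> 0 <= u i <= 1.

Section Nest.
Variable n : nat.
Variable F : V -> R.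
Variable K : R.
Hypothesis Fmono : forall u v, in01 n u -> in01 n v -> (forall i, (i < n)%nat -> u i <= v i) -> F u <= F v.
Hypothesis Flip : forall u d, 0 <= d -> in01 n u -> in01 n (add_ind u d n) -> F (add_ind u d n) - F u <= K * d.
Hypothesis Chain : forall L lo, (forall i, (i < n)%nat -> lep L (lo i)) ->
   forall j, (j < n)%nat ->
   F (add_ind lo (2 * (/3)^(S L)) (S j)) <= F (add_ind (add_ind lo (2 * (/3)^(S L)) j) ((/3)^(S L)) n).
Variable y : R.

Definition Inv (L : nat) (lo : V) : Prop :=
  (forall i, (i < n)%nat -> lep L (lo i)) /\ (forall i, (n <= i)%nat -> lo i = 0) /\
  F lo <= y <= F (add_ind lo ((/3)^L) n).

Definition Rel (L : nat) (lo lo' : V) : Prop :=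
  forall i, lo i <= lo' i /\ lo' i + (/3)^(S L) <= lo i + (/3)^L.

Lemma lep_in01 : forall L lo d, (forall i, (i < n)%nat -> lep L (lo i)) -> 0 <= d <= (/3)^L ->
   in01 n (add_ind lo d n).
Proof.
  intros L lo d H Hd i Hi. rewrite add_ind_lt by lia. destruct (lep_bounds _ _ (H i Hi)). split; lra.
Qed.

Lemma lep_in01' : forall L lo, (forall i, (i < n)%nat -> lep L (lo i)) -> in01 n lo.
Proof.
  intros L lo H i Hi. destruct (lep_bounds _ _ (H i Hi)). pose proof (pow_le (/3) L). split; lra.
Qed.

Lemma F_ext : forall u v, in01 n u -> in01 n v -> (forall i, (i < n)%nat -> u i = v i) -> F u = F v.
Proof.
  intros u v Hu Hv H. apply Rle_antisym; apply Fmono; auto; intros i Hi; rewrite H; auto; lra.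
Qed.

Lemma step_ok : forall L lo, Inv L lo -> exists lo', Inv (S L) lo' /\ Rel L lo lo'.
Proof.
  intros L lo [H1 [H2 [H3 H4]]].
  set (h := (/3)^(S L)).
  assert (Hh : (/3)^L = 3 * h) by (unfold h; simpl; field).
  assert (hpos : 0 < h) by (unfold h; apply pow_lt; lra).
  destruct (chain_pick n (fun j => F (add_ind lo (2*h) j))
            (fun j => F (add_ind (add_ind lo (2*h) j) h n)) y) as [j [Hj Hy]].
  - simpl. unfold add_ind at 1. exact H3.
  - assert (E : F (add_ind (add_ind lo (2 * h) n) h n) = F (add_ind lo ((/3)^L) n)).
    { apply F_ext.
      - intros i Hi. rewrite add_ind_lt, add_ind_lt by lia. destruct (lep_bounds _ _ (H1 i Hi)). split; lra.
      - apply (lep_in01 L); auto. pose proof (pow_le (/3) L). lra.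
      - intros i Hi. rewrite !add_ind_lt by lia. lra. }
    rewrite E. exact H4.
  - intros j0 Hj0. apply Chain; auto.
  - exists (add_ind lo (2*h) j). split; [split; [|split]|].
    + intros i Hi. destruct (Nat.lt_ge_cases i j).
      * rewrite add_ind_lt by auto. apply lep_refine, H1; auto.
      * rewrite add_ind_ge by auto. apply lep_refine, H1; auto.
    + intros i Hi. rewrite add_ind_ge by lia. auto.
    + exact Hy.
    + intros i. unfold add_ind. fold h. destruct (Nat.ltb i j); split; lra.
Qed.

Lemma step_ex : forall L lo, exists lo', Inv L lo -> Inv (S L) lo' /\ Rel L lo lo'.
Proof.
  intros L lo. destruct (classic (Inv L lo)) as [H|H].
  - destruct (step_ok L lo H) as [lo' Hl]. exists lo'. auto.
  - exists lo. intro; contradiction.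
Qed.

Definition step (L : nat) (lo : V) : V :=
  proj1_sig (constructive_indefinite_description _ (step_ex L lo)).

Lemma step_spec : forall L lo, Inv L lo -> Inv (S L) (step L lo) /\ Rel L lo (step L lo).
Proof. intros L lo. unfold step. destruct (constructive_indefinite_description _ _). simpl. auto. Qed.

Fixpoint seqlo (L : nat) : V :=
  match L with O => (fun _ => 0) | S L' => step L' (seqlo L') end.

Hypothesis Hy : F (fun _ => 0) <= y <= F (add_ind (fun _ => 0) 1 n).

Lemma seqlo_inv : forall L, Inv L (seqlo L).
Proof.
  induction L as [|L IH].
  - split; [|split].
    + intros; simpl; reflexivity.
    + intros; reflexivity.
    + simpl. exact Hy.
  - simpl. apply step_spec, IH.
Qed.

Lemma seqlo_nest : forall L d i, seqlo L i <= seqlo (L + d) i /\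
   seqlo (L + d) i + (/3)^(L+d) <= seqlo L i + (/3)^L.
Proof.
  intros L d i. induction d as [|d IH].
  - rewrite Nat.add_0_r. lra.
  - replace (L + S d)%nat with (S (L + d)) by lia. simpl seqlo.
    destruct (step_spec _ _ (seqlo_inv (L + d))) as [_ HR]. destruct (HR i). lra.
Qed.

Definition Ei (i : nat) (r : R) : Prop := exists L, r = seqlo L i.

Lemma Ei_bound : forall i, bound (Ei i).
Proof.
  intros i. exists (seqlo 0 i + 1). intros r [L HL]. subst.
  destruct (seqlo_nest 0 L i) as [_ H]. simpl in *. pose proof (pow_le (/3) L). lra.
Qed.

Lemma Ei_ne : forall i, exists r, Ei i r.
Proof. intros i. exists (seqlo 0 i). exists 0%nat. reflexivity. Qed.

Definition vlim (i : nat) : R := proj1_sig (completeness (Ei i) (Ei_bound i) (Ei_ne i)).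

Lemma vlim_bounds : forall L i, seqlo L i <= vlim i <= seqlo L i + (/3)^L.
Proof.
  intros L i. unfold vlim. destruct (completeness _ _ _) as [l [Hub Hlub]]. simpl. split.
  - apply Hub. exists L. reflexivity.
  - apply Hlub. intros r [L' HL']. subst. destruct (Nat.le_ge_cases L' L).
    + replace L with (L' + (L - L'))%nat by lia.
      destruct (seqlo_nest L' (L - L') i) as [Ha _]. pose proof (pow_le (/3) (L' + (L - L'))). lra.
    + replace L' with (L + (L' - L))%nat by lia.
      destruct (seqlo_nest L (L' - L) i) as [_ Hb]. pose proof (pow_le (/3) (L + (L' - L))). lra.
Qed.

Lemma vlim_cantor : forall i, (i < n)%nat -> cantor_set (vlim i).
Proof.
  intros i Hi L. destruct (seqlo_inv L) as [H1 _].
  apply (lep_level L (seqlo L i)); auto. apply vlim_bounds.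
Qed.

Hypothesis Kpos : 0 <= K.

Lemma vlim_F : F vlim = y.
Proof.
  assert (Hb : forall L, Rabs (F vlim - y) <= K * (/3)^L).
  { intros L. destruct (seqlo_inv L) as [H1 [_ [H3 H4]]].
    assert (Hin : in01 n (seqlo L)) by (apply (lep_in01' L); auto).
    assert (Hin2 : in01 n (add_ind (seqlo L) ((/3)^L) n)).
    { apply (lep_in01 L); auto. pose proof (pow_le (/3) L). lra. }
    assert (Hinv : in01 n vlim).
    { intros i Hi. destruct (vlim_bounds L i). destruct (lep_bounds _ _ (H1 i Hi)). split; lra. }
    assert (A1 : F (seqlo L) <= F vlim).
    { apply Fmono; auto. intros i Hi. apply vlim_bounds. }
    assert (A2 : F vlim <= F (add_ind (seqlo L) ((/3)^L) n)).
    { apply Fmono; auto. intros i Hi. rewrite add_ind_lt by auto. apply vlim_bounds. }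
    assert (A3 := Flip (seqlo L) ((/3)^L) (pow_le _ _ third_ge0) Hin Hin2).
    unfold Rabs. destruct (Rcase_abs _); lra. }
  destruct (Req_dec (F vlim) y) as [E|E]; auto. exfalso.
  assert (Hp : 0 < Rabs (F vlim - y)) by (apply Rabs_pos_lt; lra).
  destruct (pow_lt_1_zero (/3) third_lt1 (Rabs (F vlim - y) / (K + 1)))
    as [N HN]. { apply Rdiv_lt_0_compat; lra. }
  specialize (HN N (le_n _)). specialize (Hb N).
  rewrite Rabs_pos_eq in HN by (apply pow_le, third_ge0).
  assert (K * (/3)^N <= (K+1) * (/3)^N) by (pose proof (pow_le (/3) N); nra).
  assert ((K+1) * (/3)^N < Rabs (F vlim - y)).
  { apply (Rmult_lt_compat_l (K+1)) in HN; [|lra]. field_simplify in HN; lra. }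
  lra.
Qed.

End Nest.

Theorem nested (n : nat) (F : V -> R) (K : R)
  (Fmono : forall u v, in01 n u -> in01 n v -> (forall i, (i < n)%nat -> u i <= v i) -> F u <= F v)
  (Flip : forall u d, 0 <= d -> in01 n u -> in01 n (add_ind u d n) -> F (add_ind u d n) - F u <= K * d)
  (Chain : forall L lo, (forall i, (i < n)%nat -> lep L (lo i)) ->
   forall j, (j < n)%nat ->
   F (add_ind lo (2 * (/3)^(S L)) (S j)) <= F (add_ind (add_ind lo (2 * (/3)^(S L)) j) ((/3)^(S L)) n))
  (Kpos : 0 <= K) (y : R)
  (Hy : F (fun _ => 0) <= y <= F (add_ind (fun _ => 0) 1 n)) :
  exists v : V, (forall i, (i < n)%nat -> cantor_set (v i)) /\ F v = y.
Proof.
  exists (vlim n F Fmono Chain y Hy). split.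
  - intros i Hi. apply (vlim_cantor n F Fmono Chain y Hy i Hi).
  - apply (vlim_F n F K Fmono Flip Chain y Hy Kpos).
Qed.


Fixpoint sumF (n : nat) (g : nat -> R) : R :=
  match n with O => 0 | S n' => sumF n' g + g n' end.

Lemma sumF_ext : forall n f g, (forall i, (i < n)%nat -> f i = g i) -> sumF n f = sumF n g.
Proof. induction n; intros f g H; simpl; auto. rewrite (IHn f g) by (intros; apply H; lia). rewrite H by lia. auto. Qed.

Lemma sumF_le : forall n f g, (forall i, (i < n)%nat -> f i <= g i) -> sumF n f <= sumF n g.
Proof. induction n; intros f g H; simpl; [lra|]. pose proof (IHn f g ltac:(intros; apply H; lia)). pose proof (H n ltac:(lia)). lra. Qed.

Lemma sumF_plus : forall n f g, sumF n (fun i => f i + g i) = sumF n f + sumF n g.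
Proof. induction n; intros; simpl; [lra|]. rewrite IHn. lra. Qed.

Lemma sumF_minus : forall n f g, sumF n (fun i => f i - g i) = sumF n f - sumF n g.
Proof. induction n; intros; simpl; [lra|]. rewrite IHn. lra. Qed.

Lemma sumF_scal : forall n c f, sumF n (fun i => c * f i) = c * sumF n f.
Proof. induction n; intros; simpl; [lra|]. rewrite IHn. lra. Qed.

Lemma sumF_const : forall n c, sumF n (fun _ => c) = INR n * c.
Proof. induction n; intros; simpl sumF; [simpl; lra|]. rewrite IHn, S_INR. lra. Qed.

Lemma sumF_ind : forall n j c, (j < n)%nat -> sumF n (fun i => if Nat.eqb i j then c else 0) = c.
Proof.
  induction n; intros j c H; [lia|]. simpl.
  destruct (Nat.eqb_spec n j).
  - subst. rewrite (sumF_ext _ _ (fun _ => 0)). rewrite sumF_const. lra.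
    intros i Hi. destruct (Nat.eqb_spec i j); [lia|auto].
  - rewrite IHn by lia. lra.
Qed.

Lemma sumF_nonneg : forall n f, (forall i, (i < n)%nat -> 0 <= f i) -> 0 <= sumF n f.
Proof. intros. assert (E : sumF n (fun _ => 0) = 0) by (rewrite sumF_const; ring). rewrite <- E. apply sumF_le. auto. Qed.

Lemma sumF_add : forall n1 n2 f, sumF (n1 + n2) f = sumF n1 f + sumF n2 (fun i => f (n1 + i)%nat).
Proof.
  intros n1 n2 f. induction n2; simpl.
  - rewrite Nat.add_0_r. lra.
  - rewrite Nat.add_succ_r. simpl. rewrite IHn2. lra.
Qed.

Theorem nested_sep (n : nat) (f : nat -> R -> R) (mm MM : nat -> R)
  (Hb : forall i p q, (i < n)%nat -> 0 <= p -> p <= q -> q <= 1 ->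
        mm i * (q - p) <= f i q - f i p <= MM i * (q - p))
  (Hm : forall i, (i < n)%nat -> 0 <= mm i <= MM i)
  (Hc : forall j, (j < n)%nat -> 2 * MM j <= sumF n mm)
  (y : R) (Hy : sumF n (fun i => f i 0) <= y <= sumF n (fun i => f i 1)) :
  exists v : V, (forall i, (i < n)%nat -> cantor_set (v i)) /\ sumF n (fun i => f i (v i)) = y.
Proof.
  apply (nested n (fun u => sumF n (fun i => f i (u i))) (sumF n MM)).
  - intros u v Hu Hv H. apply sumF_le. intros i Hi.
    destruct (Hb i (u i) (v i) Hi) as [H1 _]; try apply Hu; try apply Hv; auto.
    pose proof (Hm i Hi). destruct (Hu i Hi). pose proof (H i Hi). nra.
  - intros u d Hd Hu Hv. rewrite Rmult_comm, <- sumF_scal.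
    assert (E: sumF n (fun i => f i (add_ind u d n i)) - sumF n (fun i => f i (u i)) =
               sumF n (fun i => f i (add_ind u d n i) - f i (u i))).
    { rewrite <- sumF_minus. reflexivity. }
    rewrite E. apply sumF_le. intros i Hi. rewrite add_ind_lt by auto.
    specialize (Hv i Hi). rewrite add_ind_lt in Hv by auto. specialize (Hu i Hi).
    destruct (Hb i (u i) (u i + d) Hi) as [_ H2]; lra.
  - intros L lo Hlo j Hj. set (h := (/3)^(S L)).
    assert (hpos : 0 < h) by (apply pow_lt; apply Rinv_0_lt_compat; lra).
    assert (Hh : (/3)^L = 3*h) by (unfold h; simpl; field).
    assert (Hlb : forall i, (i < n)%nat -> 0 <= lo i /\ lo i + 3*h <= 1).
    { intros i Hi. destruct (lep_bounds _ _ (Hlo i Hi)). lra. }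
    set (d := fun i => if Nat.eqb i j then - (mm j + MM j) * h else 0).
    assert (Hd : forall i, (i < n)%nat ->
       mm i * h + d i <= f i (add_ind (add_ind lo (2 * h) j) h n i) - f i (add_ind lo (2 * h) (S j) i)).
    { intros i Hi. destruct (Hlb i Hi) as [Hl1 Hl2]. rewrite add_ind_lt by auto. unfold d.
      destruct (Nat.eqb_spec i j).
      - subst i. rewrite (add_ind_lt lo (2*h) (S j) j) by lia. rewrite (add_ind_ge lo (2*h) j j) by lia.
        destruct (Hb j (lo j + h) (lo j + 2*h) Hi) as [_ H2]; lra.
      - destruct (Nat.lt_ge_cases i j).
        + rewrite !add_ind_lt by lia.
          destruct (Hb i (lo i + 2*h) (lo i + 2*h + h) Hi) as [H1 _]; lra.
        + rewrite !add_ind_ge by lia.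
          destruct (Hb i (lo i) (lo i + h) Hi) as [H1 _]; lra. }
    assert (S1 := sumF_le n _ _ Hd). rewrite sumF_plus in S1.
    assert (S2 : sumF n d = - (mm j + MM j) * h) by (apply sumF_ind; auto).
    rewrite S2 in S1.
    assert (E: sumF n (fun i => f i (add_ind (add_ind lo (2 * h) j) h n i) - f i (add_ind lo (2 * h) (S j) i))
       = sumF n (fun i => f i (add_ind (add_ind lo (2 * h) j) h n i)) - sumF n (fun i => f i (add_ind lo (2 * h) (S j) i))).
    { rewrite <- sumF_minus. reflexivity. }
    rewrite E in S1.
    assert (S3 : sumF n (fun i => mm i * h) = h * sumF n mm).
    { rewrite <- sumF_scal. apply sumF_ext. intros; lra. }
    rewrite S3 in S1. pose proof (Hc j Hj). pose proof (Hm j Hj). nra.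
  - apply sumF_nonneg. intros i Hi. pose proof (Hm i Hi). lra.
  - rewrite (sumF_ext n (fun i => f i (add_ind (fun _ => 0) 1 n i)) (fun i => f i 1)); [exact Hy|].
    intros i Hi. rewrite add_ind_lt by auto. f_equal. ring.
Qed.


Lemma pow_le_one : forall x n, 0 <= x <= 1 -> x ^ n <= 1.
Proof. intros. rewrite <- (pow1 n). apply pow_incr. lra. Qed.

Lemma pow_diff : forall A th x X, 0 <= th -> th <= x -> x <= X -> X <= 1 ->
  INR (S A) * th ^ A * (X - x) <= X ^ (S A) - x ^ (S A) <= INR (S A) * (X - x).
Proof.
  induction A as [|A IH]; intros th x X H0 H1 H2 H3.
  - simpl. lra.
  - destruct (IH th x X H0 H1 H2 H3) as [L U].
    assert (P1 : th ^ (S A) <= x ^ (S A)) by (apply pow_incr; lra).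
    assert (P2 : x ^ (S A) <= 1) by (apply pow_le_one; lra) .
    assert (P3 : 0 <= th ^ A) by (apply pow_le; lra).
    replace (X ^ S (S A) - x ^ S (S A)) with (X * (X ^ S A - x ^ S A) + x ^ S A * (X - x)) by (simpl; ring).
    rewrite S_INR. replace (th ^ S A) with (th * th ^ A) in P1 |- * by (simpl; ring).
    split.
    + assert (X * (X ^ S A - x ^ S A) >= th * (INR (S A) * th ^ A * (X - x))).
      { apply Rle_ge. assert (0 <= INR (S A) * th ^ A * (X - x)).
        { apply Rmult_le_pos; [apply Rmult_le_pos|]; try lra. apply pos_INR. }
        apply Rmult_le_compat; lra. }
      assert (x ^ S A * (X - x) >= th * th^A * (X - x)) by nra.
      lra.
    + assert (0 <= X ^ S A - x ^ S A).
      { assert (0 <= INR (S A) * th ^ A * (X - x)).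
        { apply Rmult_le_pos; [apply Rmult_le_pos|]; try lra. apply pos_INR. }
        lra. }
      assert (X * (X ^ S A - x ^ S A) <= X ^ S A - x ^ S A) by nra.
      assert (x ^ S A * (X - x) <= X - x) by nra.
      lra.
Qed.

Lemma w_props : forall J, (1 <= J)%nat -> 0 < (/3)^J <= /3.
Proof.
  intros J HJ. split. apply pow_lt, Rinv_0_lt_compat; lra.
  destruct J; [lia|]. simpl. assert (0 < /3) by (apply Rinv_0_lt_compat; lra).
  pose proof (pow_le_one (/3) J ltac:(split; [lra|]; apply Rlt_le; apply (Rmult_lt_reg_l 3); [lra|]; rewrite Rinv_r; lra)).
  nra.
Qed.

Theorem active_cover (n J : nat) (mu : nat -> R) (A : nat -> nat) (y : R)
  (HJ : (1 <= J)%nat)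
  (Hmu : forall i, (i < n)%nat -> 0 <= mu i /\ (1 <= A i)%nat)
  (Hc : forall j, (j < n)%nat -> 2 * (mu j * INR (A j) * (/3)^J) <=
        sumF n (fun i => mu i * INR (A i) * (/3)^J * (1 - (/3)^J)^(A i - 1)))
  (Hy : sumF n (fun i => mu i * (1 - (/3)^J)^(A i)) <= y <= sumF n mu) :
  exists X : nat -> R, (forall i, (i < n)%nat -> cantor_set (X i)) /\
    sumF n (fun i => mu i * X i ^ A i) = y.
Proof.
  set (w := (/3)^J) in *. destruct (w_props J HJ) as [w0 w1]. fold w in w0, w1.
  destruct (nested_sep n (fun i v => mu i * (1 - w + w * v) ^ A i)
     (fun i => mu i * INR (A i) * w * (1 - w)^(A i - 1)) (fun i => mu i * INR (A i) * w)) with (y := y)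
    as [v [Hv1 Hv2]].
  - intros i p q Hi Hp Hpq Hq. destruct (Hmu i Hi) as [Hm HA].
    replace (A i) with (S (A i - 1)) by lia.
    destruct (pow_diff (A i - 1) (1 - w) (1 - w + w * p) (1 - w + w * q)) as [L U]; try nra.
    replace (S (A i - 1) - 1)%nat with (A i - 1)%nat by lia.
    replace (1 - w + w * q - (1 - w + w * p)) with (w * (q - p)) in L, U by ring.
    split.
    + replace (mu i * INR (S (A i - 1)) * w * (1 - w) ^ (A i - 1) * (q - p)) with
        (mu i * (INR (S (A i - 1)) * (1 - w) ^ (A i - 1) * (w * (q - p)))) by ring.
      rewrite <- Rmult_minus_distr_l. apply Rmult_le_compat_l; lra.
    + replace (mu i * INR (S (A i - 1)) * w * (q - p)) with (mu i * (INR (S (A i - 1)) * (w * (q - p)))) by ring.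
      rewrite <- Rmult_minus_distr_l. apply Rmult_le_compat_l; lra.
  - intros i Hi. destruct (Hmu i Hi) as [Hm HA]. pose proof (pos_INR (A i)).
    assert (0 <= (1-w)^(A i - 1) <= 1) by (split; [apply pow_le; lra | apply pow_le_one; lra]).
    assert (0 <= mu i * INR (A i) * w) by (apply Rmult_le_pos; [apply Rmult_le_pos|]; lra).
    split; [apply Rmult_le_pos; lra | nra].
  - exact Hc.
  - split.
    + replace (sumF n (fun i => mu i * (1 - w + w * 0) ^ A i)) with (sumF n (fun i => mu i * (1 - w) ^ A i)).
      apply Hy. apply sumF_ext. intros. f_equal. f_equal. ring.
    + replace (sumF n (fun i => mu i * (1 - w + w * 1) ^ A i)) with (sumF n mu).
      apply Hy. apply sumF_ext. intros. replace (1 - w + w * 1) with 1 by ring. rewrite pow1. ring.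
  - exists (fun i => 1 - w + w * v i). split.
    + intros i Hi. apply cantor_top, Hv1, Hi.
    + exact Hv2.
Qed.


Lemma pow_decr : forall x m n, 0 <= x <= 1 -> (m <= n)%nat -> x ^ n <= x ^ m.
Proof.
  intros x m n Hx H. replace n with (m + (n - m))%nat by lia. rewrite pow_add.
  pose proof (pow_le x m ltac:(lra)). pose proof (pow_le_one x (n - m) Hx). nra.
Qed.

Lemma least_ex : forall (P : nat -> Prop), (exists n, P n) -> exists n, P n /\ forall k, (k < n)%nat -> ~ P k.
Proof.
  intros P [N HN]. induction N as [N IH] using (well_founded_induction lt_wf).
  destruct (classic (exists k, (k < N)%nat /\ P k)) as [[k [Hk1 Hk2]]|H].
  - apply (IH k Hk1 Hk2).
  - exists N. split; auto. intros k Hk Pk. apply H. exists k. auto.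
Qed.

Lemma cantor_pow3 : forall j, cantor_set ((/3)^j).
Proof.
  induction j; simpl. apply cantor_1. replace (/3 * (/3)^j) with ((/3)^j / 3) by (unfold Rdiv; ring).
  apply cantor_div3; auto.
Qed.

Lemma cantor_2pow3 : forall j, cantor_set (2 * (/3)^(S j)).
Proof.
  induction j.
  - simpl. replace (2 * (/3 * 1)) with ((0+2)/3) by field. apply cantor_add2, cantor_0.
  - replace (2 * (/3)^(S (S j))) with (2 * (/3)^(S j) / 3) by (simpl; field). apply cantor_div3; auto.
Qed.

Lemma third_pos : 0 < /3. Proof. apply Rinv_0_lt_compat; lra. Qed.

Lemma grid_norm : forall B v, (1 <= B)%nat -> 0 < v <= 1 ->
  exists q, cantor_set q /\ v / 2^B <= q ^ B <= v.
Proof.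
  intros B v HB Hv.
  destruct (Req_dec v 1) as [E|E].
  { exists 1. split. apply cantor_1. subst. rewrite pow1. split; [|lra].
    assert (1 <= 2^B) by (apply pow_R1_Rle; lra). apply (Rmult_le_reg_r (2^B)); [lra|].
    unfold Rdiv. rewrite Rmult_assoc, Rinv_l by lra. lra. }
  assert (Hex : exists j, ((/3)^j)^B <= v).
  { destruct (pow_lt_1_zero (/3) ltac:(rewrite Rabs_pos_eq by (left; apply third_pos); apply (Rmult_lt_reg_l 3); [lra|]; rewrite Rinv_r; lra) v ltac:(lra)) as [N HN].
    exists N. specialize (HN N (le_n _)). rewrite Rabs_pos_eq in HN by (apply pow_le; left; apply third_pos).
    assert (0 <= (/3)^N <= 1) by (split; [apply pow_le; left; apply third_pos| apply pow_le_one; split; [left; apply third_pos|]; apply Rlt_le, (Rmult_lt_reg_l 3); [lra|]; rewrite Rinv_r; lra]).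
    pose proof (pow_decr ((/3)^N) 1 B H HB). simpl in H0. lra. }
  destruct (least_ex _ Hex) as [j [Hj1 Hj2]].
  destruct j as [|j].
  { simpl in Hj1. rewrite pow1 in Hj1. lra. }
  assert (Hp : ~ ((/3)^j)^B <= v) by (apply Hj2; lia).
  apply Rnot_le_lt in Hp.
  set (q3 := (/3)^(S j)).
  assert (q3e : (/3)^j = 3 * q3) by (unfold q3; simpl; field).
  assert (q3p : 0 < q3) by (unfold q3; apply pow_lt, third_pos).
  destruct (Rle_dec ((2 * q3)^B) v) as [H2|H2].
  - exists (2 * q3). split. apply cantor_2pow3. split; auto.
    rewrite q3e in Hp. apply Rlt_le.
    replace ((3 * q3)^B) with ((3/2)^B * (2*q3)^B) in Hp by (rewrite <- Rpow_mult_distr; f_equal; field).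
    assert ((3/2)^B <= 2^B) by (apply pow_incr; lra).
    assert (0 < (2*q3)^B) by (apply pow_lt; lra).
    assert (0 < 2^B) by (apply pow_lt; lra).
    apply (Rmult_lt_reg_r (2^B)); auto. unfold Rdiv. rewrite Rmult_assoc, Rinv_l by lra. nra.
  - apply Rnot_le_lt in H2. exists q3. split. apply cantor_pow3. split; auto.
    rewrite Rpow_mult_distr in H2.
    assert (0 < 2^B) by (apply pow_lt; lra).
    apply Rlt_le. apply (Rmult_lt_reg_r (2^B)); auto. unfold Rdiv. rewrite Rmult_assoc, Rinv_l by lra. lra.
Qed.

Lemma grid_pair : forall A B w rho kap v, 0 < w < 1 -> (1 <= B)%nat -> 2^B <= rho ->
  0 < kap <= (1-w)^A -> 0 <= v <= rho * kap ->
  exists q, cantor_set q /\ v / rho <= q ^ B * (1-w)^A <= v.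
Proof.
  intros A B w rho kap v Hw HB Hr Hk Hv.
  assert (P2 : 0 < 2^B) by (apply pow_lt; lra).
  assert (Hrp : 0 < rho) by lra.
  set (top := (1-w)^A) in *.
  destruct (Req_dec v 0) as [E|E].
  { exists 0. split. apply cantor_0. subst v. rewrite pow_i by lia. unfold Rdiv. lra. }
  destruct (Rle_dec top v) as [H1|H1].
  - exists 1. rewrite pow1. split. apply cantor_1. split; [|lra].
    apply (Rmult_le_reg_r rho); auto. unfold Rdiv. rewrite Rmult_assoc, Rinv_l by lra. nra.
  - apply Rnot_le_lt in H1.
    destruct (grid_norm B (v / top) HB) as [q [Hq1 [Hq2 Hq3]]].
    { split. apply Rdiv_lt_0_compat; lra. apply (Rmult_le_reg_r top); [lra|]. unfold Rdiv. rewrite Rmult_assoc, Rinv_l by lra. lra. }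
    exists q. split; auto.
    assert (E1 : v / top * top = v) by (field; lra).
    split.
    + apply Rle_trans with (v / 2^B * 1).
      * rewrite Rmult_1_r. apply (Rmult_le_reg_r (rho * 2^B)); [nra|].
        unfold Rdiv. replace (v * / rho * (rho * 2 ^ B)) with (v * 2^B) by (field; lra).
        replace (v * / 2^B * (rho * 2 ^ B)) with (v * rho) by (field; lra). nra.
      * replace (v / 2^B * 1) with (v / top / 2^B * top) by (field; lra).
        apply Rmult_le_compat_r; lra.
    + apply Rle_trans with (v / top * top); [apply Rmult_le_compat_r; lra | lra].
Qed.

Section Greedy.
Variables (A B : nat -> nat) (w rho kap U : R).
Hypothesis Hw : 0 < w < 1.
Hypothesis Hrho : 1 <= rho.
Hypothesis HU : 0 < U <= rho * kap.
Hypothesis Hpair : forall j, (1 <= B j)%nat /\ 2 ^ (B j) <= rho /\ 0 < kap <= (1-w)^(A j).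

Definition lamq (q : nat -> R) (j : nat) := q j ^ B j * (1-w)^(A j).

Lemma greedy_run : forall n T0, 0 <= T0 -> exists q : nat -> R, (forall j, cantor_set (q j)) /\
  (forall j, (j < n)%nat -> 0 <= lamq q j <= U) /\
  0 <= T0 - sumF n (lamq q) /\
  (T0 - sumF n (lamq q) <= U \/ T0 - sumF n (lamq q) <= T0 - INR n * U / rho) /\
  (T0 <= U -> T0 - sumF n (lamq q) <= (1 - 1/rho)^n * T0).
Proof.
  induction n as [|n IH]; intros T0 HR.
  - exists (fun _ => 0). split; [intros; apply cantor_0|]. simpl.
    split; [intros; lia|]. split; [lra|]. split; [right; lra|]. lra.
  - destruct (IH T0 HR) as [q [Hq1 [Hq2 [Hq3 [Hq4 Hq5]]]]].
    remember (T0 - sumF n (lamq q)) as Rp eqn:HRp.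
    destruct (Hpair n) as [HB1 [HB2 HB3]].
    destruct (grid_pair (A n) (B n) w rho kap (Rmin Rp U) Hw HB1 HB2 HB3) as [qn [Hqn1 Hqn2]].
    { split. apply Rmin_glb; lra. pose proof (Rmin_r Rp U). lra. }
    set (q' := fun j => if Nat.eqb j n then qn else q j).
    assert (E : sumF n (lamq q') = sumF n (lamq q)).
    { apply sumF_ext. intros i Hi. unfold lamq, q'. destruct (Nat.eqb_spec i n); [lia|auto]. }
    assert (En : lamq q' n = qn ^ B n * (1-w)^(A n)) by (unfold lamq, q'; rewrite Nat.eqb_refl; auto).
    assert (Hrp : 0 < rho) by lra.
    assert (Hm1 := Rmin_l Rp U). assert (Hm2 := Rmin_r Rp U).
    assert (Hdiv : 0 <= Rmin Rp U / rho) by (apply Rmult_le_pos; [apply Rmin_glb; lra| left; apply Rinv_0_lt_compat; lra]).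
    exists q'. split; [|split; [|split; [|split]]].
    + intros j. unfold q'. destruct (Nat.eqb j n); auto.
    + intros j Hj. destruct (Nat.eqb_spec j n).
      * subst. rewrite En. split; lra.
      * unfold lamq, q'. destruct (Nat.eqb_spec j n); [lia|]. apply Hq2. lia.
    + simpl sumF. rewrite E, En. lra.
    + simpl sumF. rewrite E, En.
      destruct (Rle_dec Rp U) as [H|H].
      * left. lra.
      * destruct Hq4 as [H4|H4]; [lra|]. right. rewrite S_INR.
        rewrite Rmin_right in Hqn2 by lra.
        replace (T0 - (INR n + 1) * U / rho) with (T0 - INR n * U / rho - U / rho) by (field; lra). lra.
    + intros HRU. simpl sumF. rewrite E, En. specialize (Hq5 HRU).
      assert (0 <= 1 - 1/rho <= 1).
      { split; [|assert (0 < 1/rho) by (apply Rdiv_lt_0_compat; lra); lra].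
        apply (Rmult_le_reg_r rho); auto. unfold Rdiv. rewrite Rmult_minus_distr_r, Rmult_assoc, Rinv_l by lra. lra. }
      assert (0 <= (1 - 1/rho)^n <= 1) by (split; [apply pow_le; lra| apply pow_le_one; lra]).
      assert (Rp <= U) by nra.
      rewrite Rmin_left in Hqn2 by lra.
      replace ((1 - 1/rho)^(S n) * T0) with ((1 - 1/rho) * ((1 - 1/rho)^n * T0)) by (simpl; ring).
      assert (Rp - Rp/rho = (1 - 1/rho) * Rp) by (field; lra).
      assert ((1 - 1/rho) * Rp <= (1 - 1/rho) * ((1 - 1/rho)^n * T0)) by (apply Rmult_le_compat_l; lra).
      lra.
Qed.
End Greedy.


Definition cc (s Am : nat) (w : R) := 2 * (INR s - 1) / (INR Am * (1-w)^(s-2)).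
Definition gg (Am : nat) (w : R) := / (1-w)^Am.
Definition kk (s : nat) (w : R) := (1-w)^(s-1).

Lemma bernoulli : forall x n, 0 <= x -> 1 + INR n * x <= (1 + x)^n.
Proof.
  intros x n Hx. induction n; [simpl; lra|]. rewrite S_INR. simpl pow.
  assert (0 <= INR n * x) by (apply Rmult_le_pos; [apply pos_INR|lra]). nra.
Qed.

Lemma half_pow : forall r : nat, (1 <= r)%nat -> (1 - 1 / INR r) ^ r <= / 2.
Proof.
  intros r Hr. destruct (Nat.eq_dec r 1) as [E|E].
  { subst. simpl. lra. }
  assert (Hr2 : 2 <= INR r) by (replace 2 with (INR 2) by (simpl; ring); apply le_INR; lia).
  set (x := 1 / (INR r - 1)).
  assert (Hx : 0 < x) by (apply Rdiv_lt_0_compat; lra).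
  assert (E1 : (1 - 1 / INR r) * (1 + x) = 1) by (unfold x; field; lra).
  assert (B := bernoulli x r ltac:(lra)).
  assert (E2 : INR r * x >= 1) by (unfold x; apply Rle_ge; apply (Rmult_le_reg_r (INR r - 1)); [lra|]; field_simplify; lra).
  assert (P : (1 - 1 / INR r)^r * (1 + x)^r = 1) by (rewrite <- Rpow_mult_distr, E1; apply pow1).
  assert (0 <= (1 - 1/INR r)^r) by (apply pow_le; apply (Rmult_le_reg_r (INR r)); [lra|]; field_simplify; lra).
  nra.
Qed.

Lemma pow_pred : forall x k, (1 <= k)%nat -> x ^ k = x ^ (k - 1) * x.
Proof. intros x k H. destruct k; [lia|]. simpl. rewrite Nat.sub_0_r. ring. Qed.

Lemma chain_ok : forall n (mu : nat -> R) (A : nat -> nat) (s Am : nat) w Lam,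
  0 < w < 1 -> (2 <= s)%nat -> (1 <= Am)%nat ->
  (forall i, (i < n)%nat -> 0 <= mu i /\ (Am <= A i <= s - 1)%nat) ->
  Lam = sumF n (fun i => mu i * (1-w)^(A i)) ->
  forall j, (j < n)%nat -> mu j * (1-w)^(A j) <= Lam / cc s Am w ->
  2 * (mu j * INR (A j) * w) <= sumF n (fun i => mu i * INR (A i) * w * (1 - w)^(A i - 1)).
Proof.
  intros n mu A s Am w Lam Hw Hs HAm Hi HL j Hj Hlj.
  set (p := 1 - w) in *. assert (Hp : 0 < p < 1) by (unfold p; lra).
  assert (HAmR : 1 <= INR Am) by (replace 1 with (INR 1) by (simpl; ring); apply le_INR; lia).
  assert (R1 : INR Am * w / p * Lam <= sumF n (fun i => mu i * INR (A i) * w * p^(A i - 1))).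
  { rewrite HL. rewrite <- sumF_scal. apply sumF_le. intros i Hii.
    destruct (Hi i Hii) as [Hm [HA1 HA2]].
    rewrite (pow_pred p (A i)) by lia.
    assert (INR Am <= INR (A i)) by (apply le_INR; lia).
    assert (0 <= mu i * p^(A i - 1) * w) by (apply Rmult_le_pos; [apply Rmult_le_pos; [lra|apply pow_le; lra]|lra]).
    replace (INR Am * w / p * (mu i * (p ^ (A i - 1) * p))) with (INR Am * (mu i * p^(A i - 1) * w)) by (field; lra).
    replace (mu i * INR (A i) * w * p ^ (A i - 1)) with (INR (A i) * (mu i * p^(A i - 1) * w)) by ring.
    apply Rmult_le_compat_r; auto. }
  destruct (Hi j Hj) as [Hmj [HAj1 HAj2]].
  assert (HAj : INR (A j) <= INR s - 1).
  { pose proof (le_INR _ _ HAj2) as H. rewrite minus_INR in H by lia. simpl in H. lra. }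
  assert (Pj : p^(s-1) <= p^(A j)) by (apply pow_decr; lra || lia).
  assert (Ps : p^(s-1) = p^(s-2) * p) by (rewrite (pow_pred p (s-1)) by lia; f_equal; f_equal; lia).
  assert (P2 : 0 < p^(s-2)) by (apply pow_lt; lra).
  assert (PA : 0 < p^(A j)) by (apply pow_lt; lra).
  assert (M1 : mu j <= mu j * p^(A j) / p^(s-1)).
  { assert (Q : 0 < p^(s-1)) by (apply pow_lt; lra).
    apply (Rmult_le_reg_r (p^(s-1))); auto.
    replace (mu j * p^(A j) / p^(s-1) * p^(s-1)) with (mu j * p^(A j)) by (field; lra).
    apply Rmult_le_compat_l; lra. }
  assert (M2 : mu j * p^(A j) / p^(s-1) <= Lam / cc s Am w / p^(s-1)).
  { unfold Rdiv. apply Rmult_le_compat_r; [left; apply Rinv_0_lt_compat; rewrite Ps; nra|]. exact Hlj. }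
  assert (E3 : 2 * (INR s - 1) * w * (Lam / cc s Am w / p ^ (s - 1)) = INR Am * w / p * Lam).
  { unfold cc. fold p. rewrite Ps. assert (INR s - 1 > 0).
    { assert (2 <= INR s) by (replace 2 with (INR 2) by (simpl; ring); apply le_INR; lia). lra. }
    field. repeat split; lra. }
  assert (HwA : 0 <= INR (A j) * w) by (apply Rmult_le_pos; [apply pos_INR|lra]).
  assert (2 * (mu j * INR (A j) * w) <= 2 * (INR s - 1) * w * mu j).
  { assert (mu j * INR (A j) <= mu j * (INR s - 1)) by (apply Rmult_le_compat_l; lra). nra. }
  assert (2 * (INR s - 1) * w * mu j <= 2 * (INR s - 1) * w * (Lam / cc s Am w / p ^ (s - 1))).
  { apply Rmult_le_compat_l. assert (2 <= INR s) by (replace 2 with (INR 2) by (simpl; ring); apply le_INR; lia). nra. lra. }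
  unfold p in *. lra.
Qed.

Lemma cc_pos : forall s Am w, (2 <= s)%nat -> (1 <= Am)%nat -> 0 < w < 1 -> 0 < cc s Am w.
Proof.
  intros s Am w Hs HA Hw. unfold cc. apply Rdiv_lt_0_compat.
  - assert (2 <= INR s) by (replace 2 with (INR 2) by (simpl; ring); apply le_INR; lia). lra.
  - apply Rmult_lt_0_compat. apply lt_0_INR; lia. apply pow_lt; lra.
Qed.

Lemma gg_ge1 : forall Am w, 0 < w < 1 -> 1 <= gg Am w.
Proof.
  intros Am w Hw. unfold gg. assert (0 < (1-w)^Am) by (apply pow_lt; lra).
  assert ((1-w)^Am <= 1) by (apply pow_le_one; lra).
  apply (Rmult_le_reg_r ((1-w)^Am)); auto. rewrite Rinv_l by lra. lra.
Qed.

Theorem greedy_cover (A B : nat -> nat) (s Am J N1 t r : nat) (T : R)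
  (HJ : (1 <= J)%nat) (Hs : (3 <= s)%nat) (Hr : (1 <= r)%nat) (HAm : (1 <= Am)%nat)
  (Hp : forall j, (1 <= B j)%nat /\ (A j + B j)%nat = s /\ (Am <= A j)%nat /\ 2 ^ (B j) <= INR r)
  (H1 : INR r * (cc s Am ((/3)^J) * gg Am ((/3)^J) - 1) <= INR N1)
  (H2 : (/2)^t <= cc s Am ((/3)^J) * (gg Am ((/3)^J) - 1))
  (HT : 0 < T <= cc s Am ((/3)^J) * gg Am ((/3)^J) * kk s ((/3)^J) * INR r) :
  exists q : nat -> R, (forall j, cantor_set (q j)) /\
    sumF (N1 + r * t) (fun i => q i ^ B i * (1 - (/3)^J)^(A i)) <= T <= sumF (N1 + r * t) (fun i => q i ^ B i) /\
    (forall j, (j < N1 + r * t)%nat -> 2 * (q j ^ B j * INR (A j) * (/3)^J) <=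
        sumF (N1 + r * t) (fun i => q i ^ B i * INR (A i) * (/3)^J * (1 - (/3)^J)^(A i - 1))).
Proof.
  set (w := (/3)^J) in *. destruct (w_props J HJ) as [w0 w1]. fold w in w0, w1.
  assert (Hw : 0 < w < 1) by lra.
  set (c := cc s Am w) in *. set (g := gg Am w) in *. set (kap := kk s w) in *.
  assert (cpos : 0 < c) by (apply cc_pos; auto; lia).
  assert (g1 : 1 <= g) by (apply gg_ge1; auto).
  assert (rR : 1 <= INR r) by (replace 1 with (INR 1) by (simpl; ring); apply le_INR; lia).
  set (U := T / (c * g)).
  assert (Upos : 0 < U) by (unfold U; apply Rdiv_lt_0_compat; nra).
  assert (UT : U * (c * g) = T) by (unfold U; field; nra).
  assert (kpos : 0 < kap) by (unfold kap, kk; apply pow_lt; lra).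
  assert (HU : 0 < U <= INR r * kap).
  { split; auto. apply (Rmult_le_reg_r (c*g)); [nra|]. rewrite UT. nra. }
  assert (Hpair : forall j, (1 <= B j)%nat /\ 2 ^ (B j) <= INR r /\ 0 < kap <= (1-w)^(A j)).
  { intros j. destruct (Hp j) as [Hb1 [Hb2 [Hb3 Hb4]]]. repeat split; auto.
    unfold kap, kk. apply pow_decr; lia || lra. }
  destruct (greedy_run A B w (INR r) kap U Hw rR HU Hpair N1 T ltac:(lra))
    as [q1 [Hq1 [Hq2 [Hq3 [Hq4 _]]]]].
  set (R1 := T - sumF N1 (lamq A B w q1)) in *.
  assert (R1U : R1 <= U).
  { destruct Hq4 as [H|H]; auto.
    assert (INR N1 * U / INR r >= (c * g - 1) * U).
    { apply Rle_ge. apply (Rmult_le_reg_r (INR r)); [lra|].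
      replace (INR N1 * U / INR r * INR r) with (INR N1 * U) by (field; lra).
      assert (INR r * (c * g - 1) * U <= INR N1 * U) by (apply Rmult_le_compat_r; lra). nra. }
    nra. }
  assert (Hpair2 : forall j, (1 <= B (N1 + j)%nat)%nat /\ 2 ^ (B (N1 + j)%nat) <= INR r /\ 0 < kap <= (1-w)^(A (N1 + j)%nat)).
  { intros; apply Hpair. }
  destruct (greedy_run (fun j => A (N1 + j)%nat) (fun j => B (N1 + j)%nat) w (INR r) kap U Hw rR HU Hpair2 (r * t) R1 Hq3)
    as [q2 [Hr1 [Hr2 [Hr3 [_ Hr5]]]]].
  specialize (Hr5 R1U).
  set (q := fun j => if Nat.ltb j N1 then q1 j else q2 (j - N1)%nat).
  assert (Eq : forall j, (j < N1 + r * t)%nat -> q j ^ B j * (1 - w)^(A j) =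
     if Nat.ltb j N1 then lamq A B w q1 j else lamq (fun j => A (N1 + j)%nat) (fun j => B (N1 + j)%nat) w q2 (j - N1)).
  { intros j Hj. unfold q, lamq. destruct (Nat.ltb_spec j N1); auto. replace (N1 + (j - N1))%nat with j by lia. auto. }
  assert (Esum : sumF (N1 + r * t) (fun i => q i ^ B i * (1 - w)^(A i)) =
     sumF N1 (lamq A B w q1) + sumF (r * t) (lamq (fun j => A (N1 + j)%nat) (fun j => B (N1 + j)%nat) w q2)).
  { rewrite sumF_add. f_equal.
    - apply sumF_ext. intros i Hi. rewrite Eq by lia. destruct (Nat.ltb_spec i N1); [auto|lia].
    - apply sumF_ext. intros i Hi. rewrite Eq by lia. destruct (Nat.ltb_spec (N1 + i) N1); [lia|].
      f_equal. lia. }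
  set (Lam := sumF (N1 + r * t) (fun i => q i ^ B i * (1 - w)^(A i))).
  set (R2 := R1 - sumF (r * t) (lamq (fun j => A (N1 + j)%nat) (fun j => B (N1 + j)%nat) w q2)) in *.
  assert (LamE : Lam = T - R2) by (unfold Lam, R2, R1; rewrite Esum; ring).
  assert (Hhalf : (1 - 1 / INR r)^(r * t) <= (/2)^t).
  { rewrite pow_mult. apply pow_incr. split; [|apply half_pow; auto].
    apply pow_le. apply (Rmult_le_reg_r (INR r)); [lra|]. field_simplify; lra. }
  assert (R2b : R2 <= (/2)^t * U).
  { assert (0 <= R1) by auto. assert (0 <= (1 - 1/INR r)^(r*t)).
    { apply pow_le. apply (Rmult_le_reg_r (INR r)); [lra|]. field_simplify; lra. }
    apply Rle_trans with ((1 - 1 / INR r)^(r * t) * R1); auto.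
    apply Rle_trans with ((/2)^t * R1). apply Rmult_le_compat_r; lra.
    apply Rmult_le_compat_l; auto. apply pow_le. lra. }
  assert (LamTg : T / g <= Lam).
  { rewrite LamE. assert ((/2)^t * U <= c * (g - 1) * U) by (apply Rmult_le_compat_r; lra).
    assert (c * (g - 1) * U = T - T / g) by (rewrite <- UT; field; lra). lra. }
  assert (Lpos : 0 < T / g) by (apply Rdiv_lt_0_compat; lra).
  exists q. split; [|split; [split|]].
  - intros j. unfold q. destruct (Nat.ltb j N1); auto.
  - fold Lam. rewrite LamE. lra.
  - apply Rle_trans with (g * Lam). { apply (Rmult_le_reg_r (/g)). apply Rinv_0_lt_compat; lra.
      replace (g * Lam * /g) with Lam by (field; lra). unfold Rdiv in LamTg. lra. }
    unfold Lam. rewrite <- sumF_scal. apply sumF_le. intros i Hi.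
    destruct (Hp i) as [_ [_ [HA _]]].
    assert (Q1 : 0 < (1-w)^(A i)) by (apply pow_lt; lra).
    assert (Q2 : (1-w)^(A i) <= (1-w)^Am) by (apply pow_decr; lra || lia).
    assert (Q3 : 0 <= q i ^ B i).
    { unfold q. destruct (Nat.ltb i N1); [destruct (cantor_set_01 _ (Hq1 i))|destruct (cantor_set_01 _ (Hr1 (i - N1)%nat))]; apply pow_le; lra. }
    unfold g, gg. apply Rle_trans with (/ (1-w)^(A i) * (q i ^ B i * (1-w)^(A i))).
    + apply Rmult_le_compat_r. apply Rmult_le_pos; lra.
      apply Rinv_le_contravar; auto.
    + right. field. lra.
  - intros j Hj. apply (chain_ok (N1 + r * t) (fun i => q i ^ B i) A s Am w Lam); auto; try lia.
    + intros i Hi. destruct (Hp i) as [Hb1 [Hb2 [Hb3 _]]]. split; [|lia].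
      unfold q. destruct (Nat.ltb i N1); [destruct (cantor_set_01 _ (Hq1 i))|destruct (cantor_set_01 _ (Hr1 (i - N1)%nat))]; apply pow_le; lra.
    + rewrite Eq by auto.
      assert (lam_le : (if Nat.ltb j N1 then lamq A B w q1 j else lamq (fun j => A (N1 + j)%nat) (fun j => B (N1 + j)%nat) w q2 (j - N1)) <= U).
      { destruct (Nat.ltb_spec j N1). apply Hq2; auto. apply Hr2; lia. }
      apply Rle_trans with U; auto. fold c.
      apply (Rmult_le_reg_r c); auto. replace (Lam / c * c) with Lam by (field; lra).
      apply Rle_trans with (T / g); auto. right. unfold U. field. lra.
Qed.


Lemma nat_ceil : forall x, 0 <= x -> exists N : nat, x <= INR N < x + 1.
Proof.
  intros x Hx. destruct (INR_unbounded x) as [M HM].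
  destruct (least_ex (fun N => x <= INR N)) as [N [H1 H2]]. { exists M. lra. }
  exists N. split; auto. destruct N as [|N].
  - simpl in *. lra.
  - assert (~ x <= INR N) by (apply H2; lia). rewrite S_INR. lra.
Qed.

Theorem config (A B : nat -> nat) (m n N J : nat) (q : nat -> R) (y : R)
  (HJ : (1 <= J)%nat) (HnN : (n + N <= m)%nat)
  (Hq : forall j, cantor_set (q j))
  (HAB : forall j, (1 <= A j)%nat /\ (1 <= B j)%nat)
  (Hc : forall j, (j < n)%nat -> 2 * (q j ^ B j * INR (A j) * (/3)^J) <=
        sumF n (fun i => q i ^ B i * INR (A i) * (/3)^J * (1 - (/3)^J)^(A i - 1)))
  (Hy : sumF n (fun i => q i ^ B i * (1 - (/3)^J)^(A i)) <= y - INR N <= sumF n (fun i => q i ^ B i)) :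
  exists X Q : nat -> R, (forall j, cantor_set (X j) /\ cantor_set (Q j)) /\
     sumF m (fun j => X j ^ A j * Q j ^ B j) = y.
Proof.
  destruct (active_cover n J (fun i => q i ^ B i) A (y - INR N) HJ) as [Xa [HX1 HX2]]; auto.
  { intros i Hi. split. destruct (cantor_set_01 _ (Hq i)). apply pow_le; lra. apply HAB. }
  exists (fun j => if Nat.ltb j n then Xa j else if Nat.ltb j (n + N) then 1 else 0).
  exists (fun j => if Nat.ltb j n then q j else if Nat.ltb j (n + N) then 1 else 0).
  split.
  - intros j. destruct (Nat.ltb_spec j n); [split; auto|].
    destruct (Nat.ltb j (n + N)); split; (apply cantor_1 || apply cantor_0).
  - replace m with (n + (N + (m - n - N)))%nat by lia.
    rewrite sumF_add, sumF_add.
    rewrite (sumF_ext n _ (fun i => q i ^ B i * Xa i ^ A i)).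
    2:{ intros i Hi. destruct (Nat.ltb_spec i n); [ring|lia]. }
    rewrite (sumF_ext N _ (fun _ => 1)).
    2:{ intros i Hi. destruct (Nat.ltb_spec (n + i) n); [lia|]. destruct (Nat.ltb_spec (n+i) (n+N)); [|lia].
        rewrite !pow1. ring. }
    rewrite (sumF_ext (m - n - N) _ (fun _ => 0)).
    2:{ intros i Hi. destruct (Nat.ltb_spec (n + (N + i)) n); [lia|]. destruct (Nat.ltb_spec (n + (N + i)) (n+N)); [lia|].
        destruct (HAB (n + (N + i))%nat) as [Ha _]. rewrite pow_i by lia. ring. }
    rewrite !sumF_const. rewrite HX2. lra.
Qed.

Theorem main_cover (A B : nat -> nat) (s Am m J J' N1 t r n' : nat)
  (HJ : (1 <= J)%nat) (HJ' : (1 <= J')%nat) (Hs : (3 <= s)%nat) (Hr : (1 <= r)%nat) (HAm : (1 <= Am)%nat)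
  (Hp : forall j, (1 <= B j)%nat /\ (A j + B j)%nat = s /\ (Am <= A j)%nat /\ 2 ^ (B j) <= INR r)
  (H1 : INR r * (cc s Am ((/3)^J) * gg Am ((/3)^J) - 1) <= INR N1)
  (H2 : (/2)^t <= cc s Am ((/3)^J) * (gg Am ((/3)^J) - 1))
  (H4 : (N1 + r * t <= m)%nat)
  (T1 : 2 * (INR s - 1) <= INR n' * INR Am * (1 - (/3)^J')^(s-2))
  (T2 : 1 <= INR n' * (1 - (1 - (/3)^J')^Am))
  (T3 : INR n' * (1 - (/3)^J')^Am <= cc s Am ((/3)^J) * gg Am ((/3)^J) * kk s ((/3)^J) * INR r)
  (H8 : (n' <= m)%nat) :
  forall y, 0 <= y <= INR m -> exists X Q : nat -> R, (forall j, cantor_set (X j) /\ cantor_set (Q j)) /\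
     sumF m (fun j => X j ^ A j * Q j ^ B j) = y.
Proof.
  intros y Hy.
  assert (HAB : forall j, (1 <= A j)%nat /\ (1 <= B j)%nat).
  { intros j. destruct (Hp j) as [a1 [a2 [a3 _]]]. lia. }
  set (Y1 := cc s Am ((/3)^J) * gg Am ((/3)^J) * kk s ((/3)^J) * INR r) in *.
  destruct (Req_dec y 0) as [E|E].
  { apply (config A B m 0 0 1 (fun _ => 0) y (le_n _)); auto; try lia.
    all: try (intros; lia). all: try (intros; apply cantor_0). simpl. lra. }
  assert (ypos : 0 < y) by (destruct Hy as [Hy0 _]; destruct (Rle_lt_or_eq_dec 0 y Hy0); auto; congruence).
  destruct (Rle_dec y Y1) as [HY|HY].
  - destruct (greedy_cover A B s Am J N1 t r y HJ Hs Hr HAm Hp H1 H2) as [q [Hq1 [Hq2 Hq3]]].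
    { split; [lra|exact HY]. }
    apply (config A B m (N1 + r * t) 0 J q y HJ); auto; try lia.
    simpl. lra.
  - apply Rnot_le_lt in HY.
    destruct (w_props J' HJ') as [w0 w1].
    set (w' := (/3)^J') in *.
    assert (HpA : forall j, (Am <= A j <= s - 1)%nat).
    { intros j. destruct (Hp j) as [a1 [a2 [a3 _]]]. lia. }
    assert (n'R : INR n' <= INR m) by (apply le_INR; auto).
    assert (Sb : sumF n' (fun i => 1 ^ B i * (1 - w')^(A i)) <= INR n' * (1 - w')^Am).
    { rewrite <- sumF_const. apply sumF_le. intros i Hi. rewrite pow1, Rmult_1_l.
      apply pow_decr; [lra|apply HpA]. }
    assert (Sn : sumF n' (fun i => 1 ^ B i) = INR n').
    { rewrite (sumF_ext n' _ (fun _ => 1)) by (intros; apply pow1). rewrite sumF_const. ring. }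
    assert (Chain : forall j, (j < n')%nat -> 2 * (1 ^ B j * INR (A j) * w') <=
        sumF n' (fun i => 1 ^ B i * INR (A i) * w' * (1 - w')^(A i - 1))).
    { intros j Hj. apply Rle_trans with (sumF n' (fun _ => INR Am * w' * (1 - w')^(s-2))).
      - rewrite sumF_const. rewrite pow1.
        assert (INR (A j) <= INR s - 1).
        { pose proof (le_INR _ _ (proj2 (HpA j))) as H. rewrite minus_INR in H by lia. simpl in H. lra. }
        assert (0 <= INR (A j)) by apply pos_INR. nra.
      - apply sumF_le. intros i Hi. rewrite pow1, Rmult_1_l.
        assert (INR Am <= INR (A i)) by (apply le_INR, HpA).
        assert ((1 - w')^(s-2) <= (1 - w')^(A i - 1)) by (apply pow_decr; [lra| pose proof (HpA i); lia]).
        assert (0 <= (1 - w')^(s-2)) by (apply pow_le; lra).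
        assert (0 <= INR Am) by apply pos_INR.
        apply Rmult_le_compat; try nra. }
    destruct (Rle_dec y (INR n')) as [Hn|Hn].
    + apply (config A B m n' 0 J' (fun _ => 1) y HJ'); auto; try lia.
      * intros; apply cantor_1.
      * fold w'. simpl INR. rewrite Sn. split; lra.
    + apply Rnot_le_lt in Hn.
      destruct (nat_ceil (y - INR n')) as [N [HN1 HN2]]; [lra|].
      assert (HNm : (n' + N <= m)%nat).
      { assert (INR N < INR m - INR n' + 1) by lra.
        assert (HH : INR N < INR (m - n' + 1)) by (rewrite plus_INR, minus_INR by auto; simpl; lra).
        apply INR_lt in HH. lia. }
      apply (config A B m n' N J' (fun _ => 1) y HJ'); auto.
      * intros; apply cantor_1.
      * fold w'. rewrite Sn. split; lra.
Qed.


Lemma bern_minus : forall w k, 0 <= w <= 1 -> 1 - INR k * w <= (1 - w)^k.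
Proof.
  intros w k Hw. induction k; [simpl; lra|]. rewrite S_INR. simpl pow.
  assert (0 <= (1-w)^k) by (apply pow_le; lra).
  assert (0 <= INR k * w) by (apply Rmult_le_pos; [apply pos_INR|lra]). nra.
Qed.

Lemma pow_upper : forall w k, 0 <= w <= 1 -> (1 - w)^k * (1 + INR k * w) <= 1.
Proof.
  intros w k Hw. assert (B := bernoulli w k ltac:(lra)).
  assert (E : (1-w)^k * (1+w)^k = (1 - w*w)^k) by (rewrite <- Rpow_mult_distr; f_equal; ring).
  assert ((1 - w*w)^k <= 1) by (apply pow_le_one; nra).
  assert (0 <= (1-w)^k) by (apply pow_le; lra).
  nra.
Qed.

Lemma binom4 : forall x n, 0 <= x ->
  1 + INR n * x + INR n * (INR n - 1) / 2 * x^2 + INR n * (INR n - 1) * (INR n - 2) / 6 * x^3 <= (1 + x)^n.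
Proof.
  intros x n Hx. induction n.
  - simpl. lra.
  - rewrite S_INR. simpl pow in *.
    assert (HP : 0 <= INR n * (INR n - 1) * (INR n - 2)).
    { destruct (le_lt_dec 3 n) as [H3|H3].
      - assert (3 <= INR n) by (replace 3 with (INR 3) by (simpl; ring); apply le_INR; auto).
        assert (0 <= INR n * (INR n - 1)) by nra. nra.
      - destruct n as [|[|[|n]]]; simpl; try lra. lia. }
    assert (0 <= x*x*x*x) by (apply Rmult_le_pos; [nra|nra]).
    assert (0 <= INR n * (INR n - 1) * (INR n - 2) * (x * x * x * x)) by (apply Rmult_le_pos; auto).
    nra.
Qed.

Lemma exists_J : forall s, (1 <= s)%nat -> exists J, (1 <= J)%nat /\ 4 * INR s <= 3^J /\ 3^J < 12 * INR s.
Proof.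
  intros s Hs. assert (Hs1 : 1 <= INR s) by (replace 1 with (INR 1) by (simpl; ring); apply le_INR; auto).
  destruct (least_ex (fun J => 4 * INR s <= 3^J)) as [J [H1 H2]].
  { destruct (INR_unbounded (4 * INR s)) as [N HN]. exists N.
    pose proof (bernoulli 2 N ltac:(lra)). replace (1+2) with 3 in H by ring. lra. }
  destruct J as [|J]. { simpl in H1. lra. }
  exists (S J). split; [lia|split; auto].
  assert (~ 4 * INR s <= 3^J) by (apply H2; lia). simpl. lra.
Qed.

Lemma Am_facts : forall s, (s <= 2 * ((s+1)/2) <= s + 1)%nat.
Proof.
  intros s. pose proof (Nat.div_mod_eq (s+1) 2). pose proof (Nat.mod_upper_bound (s+1) 2 ltac:(lia)). lia.
Qed.

Lemma Bm_facts : forall s, (2 * (s/2) <= s <= 2 * (s/2) + 1)%nat.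
Proof.
  intros s. pose proof (Nat.div_mod_eq s 2). pose proof (Nat.mod_upper_bound s 2 ltac:(lia)). lia.
Qed.

Lemma params_large (s m : nat) (Hs : (8 <= s)%nat)
  (Hm : 8.4 * 2^(s/2) + 1 <= INR m) :
  exists J N1, (1 <= J)%nat /\
   INR (2^(s/2)) * (cc s ((s+1)/2) ((/3)^J) * gg ((s+1)/2) ((/3)^J) - 1) <= INR N1 /\
   (/2)^3 <= cc s ((s+1)/2) ((/3)^J) * (gg ((s+1)/2) ((/3)^J) - 1) /\
   (N1 + 2^(s/2) * 3 <= m)%nat /\
   2 * (INR s - 1) <= INR 25 * INR ((s+1)/2) * (1 - (/3)^J)^(s-2) /\
   1 <= INR 25 * (1 - (1 - (/3)^J)^((s+1)/2)) /\
   INR 25 * (1 - (/3)^J)^((s+1)/2) <= cc s ((s+1)/2) ((/3)^J) * gg ((s+1)/2) ((/3)^J) * kk s ((/3)^J) * INR (2^(s/2)) /\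
   (25 <= m)%nat.
Proof.
  set (Am := ((s+1)/2)%nat). pose proof (Am_facts s) as HA. fold Am in HA.
  assert (sR : 8 <= INR s) by (replace 8 with (INR 8) by (simpl; ring); apply le_INR; auto).
  assert (AmR : INR s <= 2 * INR Am <= INR s + 1).
  { split; [replace (2 * INR Am) with (INR (2 * Am)) by (rewrite mult_INR; simpl; ring); apply le_INR; lia|].
    replace (INR s + 1) with (INR (s + 1)) by (rewrite plus_INR; simpl; ring).
    replace (2 * INR Am) with (INR (2 * Am)) by (rewrite mult_INR; simpl; ring). apply le_INR; lia. }
  assert (rho16 : 16 <= 2^(s/2)).
  { replace 16 with (2^4) by (simpl; ring). apply Rle_pow; [lra|]. pose proof (Bm_facts s). lia. }
  rewrite pow_INR. replace (INR 2) with 2 by (simpl; ring).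
  destruct (exists_J s ltac:(lia)) as [J [HJ1 [HJ2 HJ3]]].
  set (w := (/3)^J).
  assert (wE : w * 3^J = 1) by (unfold w; rewrite <- Rpow_mult_distr; replace (/3 * 3) with 1 by field; apply pow1).
  assert (W0 : 0 < 3^J) by (apply pow_lt; lra).
  assert (wpos : 0 < w) by (unfold w; apply pow_lt, Rinv_0_lt_compat; lra).
  assert (wup : w * (4 * INR s) <= 1) by nra.
  assert (wlo : 1 < w * (12 * INR s)) by nra.
  assert (Hw1 : w < 1) by nra.
  set (p := 1 - w).
  assert (Pp : 0 < p < 1) by (unfold p; lra).
  assert (PA : 0 < p^Am) by (apply pow_lt; lra).
  assert (PS2 : 0 < p^(s-2)) by (apply pow_lt; lra).
  assert (E1 : p^(s-2) * p^Am = p^(s - 2 + Am)) by (rewrite pow_add; auto).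
  assert (B1 : 1 - INR (s - 2 + Am) * w <= p^(s-2+Am)) by (apply bern_minus; lra).
  rewrite plus_INR, minus_INR in B1 by lia. simpl (INR 2) in B1.
  assert (B2 : 5/8 <= p^(s-2) * p^Am) by (rewrite E1; nra).
  assert (B3 : 1 - INR (s-2) * w <= p^(s-2)) by (apply bern_minus; lra).
  rewrite minus_INR in B3 by lia. simpl (INR 2) in B3.
  assert (B4 : p^Am * (1 + INR Am * w) <= 1) by (apply pow_upper; lra).
  assert (B5 : p^(s-1) = p^(s-2) * p) by (rewrite (pow_pred p (s-1)) by lia; f_equal; f_equal; lia).
  assert (B6 : p^Am <= p) by (rewrite <- (pow_1 p) at 2; apply pow_decr; lra || lia).
  assert (AmPos : 1 <= INR Am) by lra.
  assert (cgE : cc s Am w * gg Am w = 2 * (INR s - 1) / (INR Am * (p^(s-2) * p^Am))).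
  { unfold cc, gg. fold p. field. repeat split; lra. }
  assert (cgB : cc s Am w * gg Am w <= 6.4).
  { rewrite cgE. apply (Rmult_le_reg_r (INR Am * (p^(s-2) * p^Am))); [nra|].
    field_simplify; [|nra]. nra. }
  assert (cg1 : 0 <= cc s Am w * gg Am w - 1).
  { rewrite cgE. apply (Rmult_le_reg_r (INR Am * (p^(s-2) * p^Am))); [nra|].
    field_simplify; [|nra]. assert (p^(s-2) * p^Am <= 1) by (apply Rle_trans with (1 * 1); [apply Rmult_le_compat; try lra; apply pow_le_one; lra|lra]). nra. }
  destruct (nat_ceil (5.4 * 2^(s/2))) as [N1 [HN1 HN2]]; [lra|].
  exists J, N1. split; auto. split; [|split; [|split; [|split; [|split; [|split]]]]].
  - fold w. apply Rle_trans with (2^(s/2) * 5.4); [apply Rmult_le_compat_l; lra|lra].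
  - fold w. unfold cc, gg. fold p.
    assert (G1 : INR Am * w <= / p^Am - 1).
    { apply (Rmult_le_reg_r (p^Am)); auto. field_simplify; nra. }
    assert (C1 : 2 * (INR s - 1) / INR Am <= 2 * (INR s - 1) / (INR Am * p^(s-2))).
    { apply Rmult_le_compat_l; [lra|]. apply Rinv_le_contravar; [nra|].
      assert (p^(s-2) <= 1) by (apply pow_le_one; lra). nra. }
    assert (C2 : 0 <= 2 * (INR s - 1) / INR Am) by (apply Rmult_le_pos; [lra|left; apply Rinv_0_lt_compat; lra]).
    assert (C3 : 2 * (INR s - 1) / INR Am * (INR Am * w) = 2 * (INR s - 1) * w) by (field; lra).
    assert (2 * (INR s - 1) / INR Am * (INR Am * w) <= 2 * (INR s - 1) / (INR Am * p ^ (s - 2)) * (/ p ^ Am - 1)).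
    { apply Rmult_le_compat; nra. }
    assert (H12 : 2 * (INR s - 1) * (w * (12 * INR s)) >= 2 * (INR s - 1)) by nra.
    assert (H13 : 2 * (INR s - 1) * w >= / 8).
    { apply Rle_ge. apply (Rmult_le_reg_r (12 * INR s)); [lra|]. nra. }
    simpl. lra.
  - assert (INR (N1 + 2^(s/2) * 3) < INR m).
    { rewrite plus_INR, mult_INR, pow_INR. replace (INR 2) with 2 by (simpl; ring). replace (INR 3) with 3 by (simpl; ring). lra. }
    apply INR_lt in H. lia.
  - fold w. fold p. replace (INR 25) with 25 by (simpl; ring). nra.
  - fold w. fold p. replace (INR 25) with 25 by (simpl; ring).
    assert (INR Am * w >= 1/24) by nra.
    assert (p^Am <= 24/25).
    { apply (Rmult_le_reg_r (1 + INR Am * w)); [nra|]. nra. }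
    lra.
  - fold w. unfold cc, gg, kk. fold p. rewrite B5.
    assert (E : 2 * (INR s - 1) / (INR Am * p ^ (s - 2)) * / p ^ Am * (p ^ (s - 2) * p) = 2 * (INR s - 1) / INR Am * (p / p^Am))
      by (field; lra).
    rewrite E.
    assert (1 <= p / p^Am) by (apply (Rmult_le_reg_r (p^Am)); auto; field_simplify; lra).
    assert (2 <= 2 * (INR s - 1) / INR Am) by (apply (Rmult_le_reg_r (INR Am)); [lra|]; field_simplify; lra).
    assert (p^Am <= 1) by (apply pow_le_one; lra). replace (INR 25) with 25 by (simpl; ring).
    assert (2 <= 2 * (INR s - 1) / INR Am * (p / p^Am)) by nra.
    assert (32 <= 2 * (INR s - 1) / INR Am * (p / p^Am) * 2^(s/2)) by nra. nra.
  - assert (INR 25 < INR m) by (simpl; lra). apply INR_lt in H. lia.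
Qed.


Lemma Rceil_ge : forall z, z <= IZR (Rceil z).
Proof.
  intros z. unfold Rceil. rewrite opp_IZR, minus_IZR. destruct (archimed (- z)) as [_ H]. simpl. lra.
Qed.

Definition a_s (s : nat) := (INR s + 3) / (INR s - 2).
Definition rr_s (s : nat) := (5 * INR s + 6) / (5 * INR s - 6).

Lemma decode_gen (s k : nat) (hs : (2 < s)%nat)
  (hb : INR k >= Rpower 2 (INR s / 2 + 1) *
      IZR (Rceil (Rpower ((INR s + 3) / (INR s - 2)) (INR s / 2 - 1)
                  * ((5 * INR s + 6) / (5 * INR s - 6)) + 1))) :
  forall f, 0 <= f -> f <= Rpower 2 (INR s / 2 - INR (s/2)) ->
  2 * (2^(s/2) * f * (a_s s ^ (s/2 - 1) * rr_s s + 1)) <= INR k.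
Proof.
  intros f Hf0 Hf.
  assert (sR : 3 <= INR s) by (replace 3 with (INR 3) by (simpl; ring); apply le_INR; lia).
  pose proof (Bm_facts s) as HB.
  assert (hR : 2 * INR (s/2) <= INR s <= 2 * INR (s/2) + 1).
  { split.
    - replace (2 * INR (s/2)) with (INR (2 * (s/2))) by (rewrite mult_INR; simpl; ring). apply le_INR; lia.
    - replace (2 * INR (s/2) + 1) with (INR (2 * (s/2) + 1)) by (rewrite plus_INR, mult_INR; simpl; ring). apply le_INR; lia. }
  assert (h1 : (1 <= s/2)%nat) by lia.
  assert (h1R : 1 <= INR (s/2)) by (replace 1 with (INR 1) by (simpl; ring); apply le_INR; auto).
  assert (Ha : 1 <= a_s s) by (unfold a_s; apply (Rmult_le_reg_r (INR s - 2)); [lra|]; field_simplify; lra).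
  assert (Hrr : 1 <= rr_s s) by (unfold rr_s; apply (Rmult_le_reg_r (5 * INR s - 6)); [lra|]; field_simplify; lra).
  assert (P2 : 2 * (2^(s/2) * f) <= Rpower 2 (INR s / 2 + 1)).
  { rewrite Rpower_plus, Rpower_1 by lra.
    replace (INR s / 2) with (INR (s/2) + (INR s / 2 - INR (s/2))) at 1 by ring.
    rewrite Rpower_plus, Rpower_pow by lra.
    assert (0 < 2^(s/2)) by (apply pow_lt; lra). nra. }
  assert (Pa : a_s s ^ (s/2 - 1) <= Rpower ((INR s + 3) / (INR s - 2)) (INR s / 2 - 1)).
  { fold (a_s s). rewrite <- Rpower_pow by lra. apply Rle_Rpower; auto.
    rewrite minus_INR by auto. change (INR 1) with 1. lra. }
  assert (Pc := Rceil_ge (Rpower ((INR s + 3) / (INR s - 2)) (INR s / 2 - 1) * ((5 * INR s + 6) / (5 * INR s - 6)) + 1)).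
  fold (rr_s s) in Pc, hb.
  assert (0 <= a_s s ^ (s/2 - 1)) by (apply pow_le; lra).
  assert (Q1 : a_s s ^ (s/2 - 1) * rr_s s + 1 <= IZR (Rceil (Rpower ((INR s + 3) / (INR s - 2)) (INR s / 2 - 1) * rr_s s + 1))).
  { assert (a_s s ^ (s/2 - 1) * rr_s s <= Rpower ((INR s + 3) / (INR s - 2)) (INR s / 2 - 1) * rr_s s)
      by (apply Rmult_le_compat_r; lra). lra. }
  assert (0 <= 2 * (2^(s/2) * f)) by (assert (0 < 2^(s/2)) by (apply pow_lt; lra); nra).
  assert (0 <= a_s s ^ (s/2 - 1) * rr_s s + 1) by nra.
  apply Rle_trans with (Rpower 2 (INR s / 2 + 1) * IZR (Rceil (Rpower ((INR s + 3) / (INR s - 2)) (INR s / 2 - 1) * rr_s s + 1))).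
  - rewrite <- Rmult_assoc. apply Rmult_le_compat; auto.
  - lra.
Qed.

Lemma le_div : forall a b c, 0 < c -> a * c <= b -> a <= b / c.
Proof. intros a b c Hc H. apply (Rmult_le_reg_r c); auto. replace (b / c * c) with b by (field; lra). auto. Qed.

Lemma L4_even : forall N, 3 <= N ->
  8.4625 <= (1 + N * (5/(2*N)) + N * (N - 1) / 2 * (5/(2*N))^2 + N * (N - 1) * (N - 2) / 6 * (5/(2*N))^3)
            * ((10 * N + 16) / (10 * N + 4)) + 1.
Proof.
  intros N HN.
  replace (1 + N * (5/(2*N)) + N * (N - 1) / 2 * (5/(2*N))^2 + N * (N - 1) * (N - 2) / 6 * (5/(2*N))^3)
    with ((443 * N^2 - 525 * N + 250) / (48 * N^2)) by (field; lra).
  replace ((443 * N ^ 2 - 525 * N + 250) / (48 * N ^ 2) * ((10 * N + 16) / (10 * N + 4)) + 1)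
    with (((443 * N ^ 2 - 525 * N + 250) * (10 * N + 16) + 48 * N^2 * (10 * N + 4)) / (48 * N^2 * (10 * N + 4))) by (field; lra).
  apply le_div. { assert (0 < N^2) by nra. nra. }
  assert (0 <= (N - 3) * N * N) by (apply Rmult_le_pos; [apply Rmult_le_pos|]; lra).
  nra.
Qed.

Lemma L4_odd : forall N, 3 <= N ->
  5.002 <= (1 + N * (5/(2*N+1)) + N * (N - 1) / 2 * (5/(2*N+1))^2 + N * (N - 1) * (N - 2) / 6 * (5/(2*N+1))^3)
            * ((10 * N + 21) / (10 * N + 9)).
Proof.
  intros N HN.
  replace (1 + N * (5/(2*N+1)) + N * (N - 1) / 2 * (5/(2*N+1))^2 + N * (N - 1) * (N - 2) / 6 * (5/(2*N+1))^3)
    with ((443 * N^3 - 258 * N^2 + 241 * N + 6) / (6 * (2*N+1)^3)) by (field; lra).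
  replace ((443 * N^3 - 258 * N^2 + 241 * N + 6) / (6 * (2*N+1)^3) * ((10 * N + 21) / (10 * N + 9)))
    with (((443 * N^3 - 258 * N^2 + 241 * N + 6) * (10 * N + 21)) / (6 * (2*N+1)^3 * (10 * N + 9))) by (field; lra).
  assert (D : 0 < 6 * (2*N+1)^3 * (10 * N + 9)) by (assert (0 < (2*N+1)^3) by (apply pow_lt; lra); nra).
  apply le_div; auto.
  assert (0 <= (N - 3) * N * N * N) by (repeat apply Rmult_le_pos; lra).
  assert (0 <= (N - 3) * N * N) by (repeat apply Rmult_le_pos; lra).
  simpl. nra.
Qed.

Lemma f1_ok : forall s, 1 <= Rpower 2 (INR s / 2 - INR (s/2)).
Proof.
  intros s. pose proof (Bm_facts s).
  assert (2 * INR (s/2) <= INR s) by (replace (2 * INR (s/2)) with (INR (2 * (s/2))) by (rewrite mult_INR; simpl; ring); apply le_INR; lia).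
  rewrite <- (Rpower_O 2) at 1 by lra. apply Rle_Rpower; lra.
Qed.

Lemma mbound_large (s k : nat) (hs : (8 <= s)%nat)
  (hb : INR k >= Rpower 2 (INR s / 2 + 1) *
      IZR (Rceil (Rpower ((INR s + 3) / (INR s - 2)) (INR s / 2 - 1)
                  * ((5 * INR s + 6) / (5 * INR s - 6)) + 1))) :
  2 * (8.4 * 2^(s/2) + 1) <= INR k.
Proof.
  pose proof (Bm_facts s) as HB.
  assert (rho16 : 16 <= 2^(s/2)) by (replace 16 with (2^4) by (simpl; ring); apply Rle_pow; [lra|lia]).
  set (n := (s/2 - 1)%nat).
  assert (NR : 3 <= INR n) by (replace 3 with (INR 3) by (simpl; ring); apply le_INR; unfold n; lia).
  assert (nE : INR (s/2) = INR n + 1) by (unfold n; rewrite <- S_INR; f_equal; lia).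
  destruct (Nat.eq_dec s (2 * (s/2))) as [Ev|Od].
  - assert (sE : INR s = 2 * INR n + 2) by (rewrite Ev at 1; rewrite mult_INR, nE; simpl; ring).
    assert (D := decode_gen s k ltac:(lia) hb 1 ltac:(lra) (f1_ok s)).
    assert (aE : a_s s = 1 + 5 / (2 * INR n)) by (unfold a_s; rewrite sE; field; lra).
    assert (rE : rr_s s = (10 * INR n + 16) / (10 * INR n + 4)) by (unfold rr_s; rewrite sE; field; lra).
    fold n in D. rewrite aE, rE in D.
    assert (Bn := binom4 (5 / (2 * INR n)) n ltac:(apply Rmult_le_pos; [lra|left; apply Rinv_0_lt_compat; lra])).
    assert (L := L4_even (INR n) NR).
    assert (0 < (10 * INR n + 16) / (10 * INR n + 4)) by (apply Rdiv_lt_0_compat; lra).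
    assert (8.4625 <= (1 + 5 / (2 * INR n))^n * ((10 * INR n + 16) / (10 * INR n + 4)) + 1).
    { apply Rle_trans with (1 := L). apply Rplus_le_compat_r. apply Rmult_le_compat_r; lra. }
    nra.
  - assert (Od' : s = (2 * (s/2) + 1)%nat) by lia.
    assert (sE : INR s = 2 * INR n + 3) by (rewrite Od' at 1; rewrite plus_INR, mult_INR, nE; simpl; ring).
    assert (Hf : 1.41 <= Rpower 2 (INR s / 2 - INR (s/2))).
    { replace (INR s / 2 - INR (s/2)) with (/2) by (rewrite sE, nE; field).
      rewrite Rpower_sqrt by lra. rewrite <- (sqrt_square 1.41) by lra. apply sqrt_le_1_alt. lra. }
    assert (D := decode_gen s k ltac:(lia) hb 1.41 ltac:(lra) Hf).
    assert (aE : a_s s = 1 + 5 / (2 * INR n + 1)) by (unfold a_s; rewrite sE; field; lra).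
    assert (rE : rr_s s = (10 * INR n + 21) / (10 * INR n + 9)) by (unfold rr_s; rewrite sE; field; lra).
    fold n in D. rewrite aE, rE in D.
    assert (Bn := binom4 (5 / (2 * INR n + 1)) n ltac:(apply Rmult_le_pos; [lra|left; apply Rinv_0_lt_compat; lra])).
    assert (L := L4_odd (INR n) NR).
    assert (0 < (10 * INR n + 21) / (10 * INR n + 9)) by (apply Rdiv_lt_0_compat; lra).
    assert (5.002 <= (1 + 5 / (2 * INR n + 1))^n * ((10 * INR n + 21) / (10 * INR n + 9))).
    { apply Rle_trans with (1 := L). apply Rmult_le_compat_r; lra. }
    nra.
Qed.


Definition PairHyp (A B : nat -> nat) (s : nat) :=
  forall j, (1 <= B j)%nat /\ (A j + B j)%nat = s /\ ((s+1)/2 <= A j)%nat /\ 2 ^ (B j) <= INR (2^(s/2)).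

Definition Cover (A B : nat -> nat) (m : nat) :=
  forall y, 0 <= y <= INR m -> exists X Q : nat -> R, (forall j, cantor_set (X j) /\ cantor_set (Q j)) /\
     sumF m (fun j => X j ^ A j * Q j ^ B j) = y.

Ltac num := unfold cc, gg, kk, a_s, rr_s in *; simpl in *; lra.

Lemma nat_from_R : forall a m : nat, INR a < INR m -> (a < m)%nat.
Proof. intros. apply INR_lt. auto. Qed.

Lemma small_cover (s m : nat) (A B : nat -> nat) (Hs : (3 <= s <= 7)%nat) (Hp : PairHyp A B s)
  (Hm : 2^(s/2) * (a_s s ^ (s/2 - 1) * rr_s s + 1) <= INR m) : Cover A B m.
Proof.
  unfold Cover. intros y Hy.
  assert (E : s = 3%nat \/ s = 4%nat \/ s = 5%nat \/ s = 6%nat \/ s = 7%nat) by lia.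
  destruct E as [E|[E|[E|[E|E]]]]; subst s.
  - apply (main_cover A B 3 2 m 2 1 4 1 2 3); auto; try lia; try num.
    apply nat_from_R. num.
    apply Nat.lt_le_incl. apply nat_from_R. num.
  - apply (main_cover A B 4 2 m 2 1 16 0 4 7); auto; try lia; try num.
    apply Nat.lt_le_incl. apply nat_from_R. num.
    apply Nat.lt_le_incl. apply nat_from_R. num.
  - apply (main_cover A B 5 3 m 2 1 18 0 4 9); auto; try lia; try num.
    apply Nat.lt_le_incl. apply nat_from_R. num.
    apply Nat.lt_le_incl. apply nat_from_R. num.
  - apply (main_cover A B 6 3 m 3 1 27 2 8 17); auto; try lia; try num.
    apply Nat.lt_le_incl. apply nat_from_R. num.
    apply Nat.lt_le_incl. apply nat_from_R. num.
  - apply (main_cover A B 7 4 m 3 1 26 1 8 23); auto; try lia; try num.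
    apply Nat.lt_le_incl. apply nat_from_R. num.
    apply Nat.lt_le_incl. apply nat_from_R. num.
Qed.


Definition Afun (a : nat -> nat) (m s j : nat) : nat :=
  if Nat.ltb j m then Nat.max (a (2*j+1)%nat) (a (2*j+2)%nat) else (s - 1)%nat.
Definition Bfun (a : nat -> nat) (m s j : nat) : nat :=
  if Nat.ltb j m then Nat.min (a (2*j+1)%nat) (a (2*j+2)%nat) else 1%nat.

Lemma pair_hyp_ok (s m : nat) (a : nat -> nat) (hs : (3 <= s)%nat)
  (hpos : forall j, (j < m)%nat -> (1 <= a (2*j+1)%nat)%nat /\ (1 <= a (2*j+2)%nat)%nat)
  (hsum : forall j, (j < m)%nat -> (a (2*j+1)%nat + a (2*j+2)%nat)%nat = s) :
  PairHyp (Afun a m s) (Bfun a m s) s.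
Proof.
  intros j. pose proof (Am_facts s). pose proof (Bm_facts s).
  assert (HB : forall b, (b <= s/2)%nat -> 2 ^ b <= INR (2^(s/2))).
  { intros b Hb. rewrite pow_INR. replace (INR 2) with 2 by (simpl; ring). apply Rle_pow; [lra|auto]. }
  unfold Afun, Bfun. destruct (Nat.ltb_spec j m) as [Hj|Hj].
  - destruct (hpos j Hj). pose proof (hsum j Hj).
    split; [lia|split; [lia|split; [lia|]]]. apply HB. lia.
  - split; [lia|split; [lia|split; [lia|]]]. apply HB. lia.
Qed.

Lemma sum_f_sumF : forall f n, sum_f_R0 f n = sumF (S n) f.
Proof. intros f n. induction n; simpl; [lra|]. rewrite IHn. simpl. ring. Qed.

Theorem cover_all (s k : nat) (a : nat -> nat)
  (hs : (2 < s)%nat)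
  (hpos : forall j, (j < k/2)%nat -> (1 <= a (2*j+1)%nat)%nat /\ (1 <= a (2*j+2)%nat)%nat)
  (hsum : forall j, (j < k/2)%nat -> (a (2*j+1)%nat + a (2*j+2)%nat)%nat = s)
  (hk2 : INR k = 2 * INR (k/2))
  (hbound : INR k >= Rpower 2 (INR s / 2 + 1) *
      IZR (Rceil (Rpower ((INR s + 3) / (INR s - 2)) (INR s / 2 - 1)
                  * ((5 * INR s + 6) / (5 * INR s - 6)) + 1))) :
  Cover (Afun a (k/2) s) (Bfun a (k/2) s) (k/2).
Proof.
  set (m := (k/2)%nat) in *.
  assert (PH := pair_hyp_ok s m a ltac:(lia) hpos hsum).
  destruct (le_lt_dec 8 s) as [H8|H8].
  - assert (MB := mbound_large s k H8 hbound).
    destruct (params_large s m H8 ltac:(lra)) as [J [N1 [P1 [P2 [P3 [P4 [P5 [P6 [P7 P8]]]]]]]]].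
    intros y Hy.
    apply (main_cover (Afun a m s) (Bfun a m s) s ((s+1)/2) m J J N1 3 (2^(s/2)) 25); auto.
    all: try lia.
    all: try (pose proof (Nat.pow_nonzero 2 (s/2) ltac:(lia)); lia).
    all: pose proof (Am_facts s); lia.
  - apply (small_cover s); auto. lia.
    assert (D := decode_gen s k hs hbound 1 ltac:(lra) (f1_ok s)). lra.
Qed.


Definition mkx (a : nat -> nat) (X Q : nat -> R) (i : nat) : R :=
  match i with
  | O => 0
  | S i' => let j := Nat.div2 i' in
      if Nat.even i' then (if Nat.leb (a (2*j+2)%nat) (a (2*j+1)%nat) then X j else Q j)
      else (if Nat.leb (a (2*j+2)%nat) (a (2*j+1)%nat) then Q j else X j)
  end.

Lemma mkx_odd : forall a X Q j, mkx a X Q (2*j+1)%nat = if Nat.leb (a (2*j+2)%nat) (a (2*j+1)%nat) then X j else Q j.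
Proof.
  intros. replace (2*j+1)%nat with (S (2*j)) at 1 by lia. unfold mkx.
  rewrite Nat.even_even, Nat.div2_double. reflexivity.
Qed.

Lemma mkx_even : forall a X Q j, mkx a X Q (2*j+2)%nat = if Nat.leb (a (2*j+2)%nat) (a (2*j+1)%nat) then Q j else X j.
Proof.
  intros. replace (2*j+2)%nat with (S (2*j+1)) at 1 by lia. unfold mkx.
  assert (E : Nat.div2 (2*j+1) = j) by (replace (2*j+1)%nat with (S (2*j)) by lia; apply Nat.div2_succ_double).
  rewrite Nat.even_odd, E. reflexivity.
Qed.

Lemma mkx_cantor : forall a X Q, (forall j, cantor_set (X j) /\ cantor_set (Q j)) ->
  forall i, (1 <= i)%nat -> cantor_set (mkx a X Q i).
Proof.
  intros a X Q H i Hi. destruct i; [lia|]. simpl.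
  destruct (Nat.even i); destruct (Nat.leb _ _); apply H.
Qed.

Theorem theorem1p1 (s k : nat) (a : nat -> nat)
  (hs : (2 < s)%nat) (hk : (0 < k)%nat) (hkeven : Nat.Even k)
  (hapos : forall i : nat, (1 <= i <= k)%nat -> (0 < a i)%nat)
  (hsum : forall i : nat, (1 <= i <= k / 2)%nat -> (a (2 * i - 1) + a (2 * i))%nat = s)
  (hbound : INR k >= Rpower 2 (INR s / 2 + 1) *
      IZR (Rceil (Rpower ((INR s + 3) / (INR s - 2)) (INR s / 2 - 1)
                  * ((5 * INR s + 6) / (5 * INR s - 6)) + 1))) :
  forall y : R,
    (0 <= y <= INR k / 2) <->
    (exists x : nat -> R,
       (forall i : nat, (1 <= i <= k)%nat -> cantor_set (x i)) /\
       y = sum_f_R0 (fun j => x (2 * j + 1)%nat ^ a (2 * j + 1)%nat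
                              * x (2 * j + 2)%nat ^ a (2 * j + 2)%nat)
                    (k / 2 - 1)%nat).
Proof.
  destruct hkeven as [m Hm].
  assert (Hk2 : (k / 2 = m)%nat) by (rewrite Hm; replace (2 * m)%nat with (m * 2)%nat by lia; apply Nat.div_mul; lia).
  assert (Hm1 : (1 <= m)%nat) by lia.
  assert (HkR : INR k = 2 * INR m) by (rewrite Hm, mult_INR; simpl; ring).
  assert (hpos' : forall j, (j < k/2)%nat -> (1 <= a (2*j+1)%nat)%nat /\ (1 <= a (2*j+2)%nat)%nat).
  { intros j Hj. rewrite Hk2 in Hj. split; apply hapos; lia. }
  assert (hsum' : forall j, (j < k/2)%nat -> (a (2*j+1)%nat + a (2*j+2)%nat)%nat = s).
  { intros j Hj. rewrite Hk2 in Hj. specialize (hsum (S j) ltac:(rewrite Hk2; lia)).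
    replace (2 * S j - 1)%nat with (2*j+1)%nat in hsum by lia.
    replace (2 * S j)%nat with (2*j+2)%nat in hsum by lia. exact hsum. }
  assert (CV := cover_all s k a hs hpos' hsum' ltac:(rewrite Hk2; exact HkR) hbound).
  rewrite Hk2 in CV.
  rewrite Hk2. intros y.
  split.
  - intros Hy. destruct (CV y ltac:(lra)) as [X [Q [HXQ Hsum]]].
    exists (mkx a X Q). split.
    + intros i Hi. apply mkx_cantor; auto. lia.
    + rewrite sum_f_sumF. replace (S (m - 1)) with m by lia. rewrite <- Hsum. apply sumF_ext. intros j Hj.
      rewrite mkx_odd, mkx_even. unfold Afun, Bfun.
      destruct (Nat.ltb_spec j m); [|lia].
      destruct (Nat.leb_spec (a (2*j+2)%nat) (a (2*j+1)%nat)).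
      * rewrite Nat.max_l, Nat.min_r by lia. reflexivity.
      * rewrite Nat.max_r, Nat.min_l by lia. ring.
  - intros [x [Hx Hy]]. subst y. rewrite sum_f_sumF. replace (S (m - 1)) with m by lia.
    assert (T : forall j, (j < m)%nat -> 0 <= x (2 * j + 1)%nat ^ a (2 * j + 1)%nat * x (2 * j + 2)%nat ^ a (2 * j + 2)%nat <= 1).
    { intros j Hj. destruct (cantor_set_01 _ (Hx (2*j+1)%nat ltac:(lia))).
      destruct (cantor_set_01 _ (Hx (2*j+2)%nat ltac:(lia))).
      assert (0 <= x (2 * j + 1)%nat ^ a (2 * j + 1)%nat <= 1) by (split; [apply pow_le| apply pow_le_one]; lra).
      assert (0 <= x (2 * j + 2)%nat ^ a (2 * j + 2)%nat <= 1) by (split; [apply pow_le| apply pow_le_one]; lra).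
      split; nra. }
    split.
    + apply sumF_nonneg. intros; apply T; auto.
    + apply Rle_trans with (sumF m (fun _ => 1)).
      * apply sumF_le. intros; apply T; auto.
      * rewrite sumF_const. lra.
Qed.
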